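(* Let all types below carry change structures (value type $V$, change type $D$, $\oplus:V\to D\to V$, $\ominus:V\to V\to D$, with $x\oplus(y\ominus x)=y$), products carrying the componentwise change structure. Each of the following triples $(C,i,d)$ is a value preserving incrementalization of the indicated function $f$: (1) (Triv) For any $f:A\to B$: $C=A$, $i\,x=(f\,x,x)$, $d\,x'\,x=(f(x\oplus x')\ominus f\,x,\ x\oplus x')$. (2) (Self) For $f:A\to B$ and $d_0:A'\to B'$ with $f(x\oplus x')=f\,x\oplus d_0\,x'$ for all $x,x'$: $C=\mathsf{Unit}$, $i\,x=(f\,x,\star)$, $d\,x'\,\star=(d_0\,x',\star)$. (3) (Lin) For $f:A\to B$ with $A=A'$, $B=B'$ and $f(x\oplus x')=f\,x\oplus f\,x'$ for all $x,x'$: $C=\mathsf{Unit}$, $i\,x=(f\,x,\star)$, $d\,x'\,\star=(f\,x',\star)$. (4) (BiLin) For $f:A\times B\to C_0$ with $A=A'$, $B=B'$, $C_0=C_0'$, such that $f(x\oplus x',y)=f(x,y)\oplus f(x',y)$ and $f(x,y\oplus y')=f(x,y)\oplus f(x,y')$ for all $x,x',y,y'$, and $\oplus$ on $C_0$ is commutative and associative: $C=A\times B$, $i(x,y)=(f(x,y),(x,y))$, $d\,(x',y')\,(x,y)=(f(x',y')\oplus f(x',y)\oplus f(x,y'),\ (x\oplus x',y\oplus y'))$. (5) (Add) For a type $A$ with $A=A'$ and $\oplus$ commutative and associative on $A$, and $f:A\times A\to A$, $f(x,y)=x\oplus y$: $C=\mathsf{Unit}$, $i(x,y)=(x\oplus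 y,\star)$, $d\,(x',y')\,\star=(x'\oplus y',\star)$.
   Context: For a function $f:A\to B$ between change structures (writing $A'$, $B'$ for the change types), an incrementalization is a triple $(C,i,d)$ with $C$ a type, $i:A\to B\times C$, $d:A'\to C\to B'\times C$. ''$A=A'$'' means the change type of $A$ equals its value type, so $\oplus:A\to A\to A$. Define $\mathsf{iter}\,(C,i,d)\,x\,[\,]=i\,x$ and $\mathsf{iter}\,(C,i,d)\,x\,(x'::xs')=(y\oplus y',c_2)$ where $(y,c_1)=\mathsf{iter}\,(C,i,d)\,x\,xs'$ and $(y',c_2)=d\,x'\,c_1$; and $\mathsf{sum}\,x\,[\,]=x$, $\mathsf{sum}\,x\,(x'::xs')=(\mathsf{sum}\,x\,xs')\oplus x'$. The incrementalization is value preserving for $f$ if $(\mathsf{iter}\,(C,i,d)\,x\,xs')_1=f(\mathsf{sum}\,x\,xs')$ for all $x\in A$ and all finite lists $xs'$ of changes. $\star$ denotes the element of $\mathsf{Unit}$. *)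

(* Defs.v *)
From Stdlib Require Import List.

Record ChangeStruct (V D : Type) := {
  oplus : V -> D -> V;
  ominus : V -> V -> D;
  oplus_ominus : forall x y : V, oplus x (ominus y x) = y
}.
Arguments oplus {V D} c _ _.
Arguments ominus {V D} c _ _.

Definition prodCS {VA DA VB DB : Type}
  (ca : ChangeStruct VA DA) (cb : ChangeStruct VB DB)
  : ChangeStruct (VA * VB) (DA * DB).
Proof.
  refine {| oplus := fun x dx => (oplus ca (fst x) (fst dx), oplus cb (snd x) (snd dx));
            ominus := fun y x => (ominus ca (fst y) (fst x), ominus cb (snd y) (snd x)) |}.
  intros [x1 x2] [y1 y2]; simpl.
  rewrite !oplus_ominus; reflexivity.
Defined.

Fixpoint iter {A A' B B' C : Type} (cb : ChangeStruct B B')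
  (i : A -> B * C) (d : A' -> C -> B' * C) (x : A) (xs : list A') : B * C :=
  match xs with
  | nil => i x
  | x' :: xs' =>
      let (y, c1) := iter cb i d x xs' in
      let (y', c2) := d x' c1 in
      (oplus cb y y', c2)
  end.

Fixpoint sum {A A' : Type} (ca : ChangeStruct A A') (x : A) (xs : list A') : A :=
  match xs with
  | nil => x
  | x' :: xs' => oplus ca (sum ca x xs') x'
  end.

Definition value_preserving {A A' B B' : Type}
  (ca : ChangeStruct A A') (cb : ChangeStruct B B') (f : A -> B)
  (C : Type) (i : A -> B * C) (d : A' -> C -> B' * C) : Prop :=
  forall (x : A) (xs : list A'), fst (iter cb i d x xs) = f (sum ca x xs).

(* Main.v *)
Require Import Defs.

Theorem theorem5p7 :
  (* (1) Triv *)
  (forall (A A' B B' : Type) (ca : ChangeStruct A A') (cb : ChangeStruct B B')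
          (f : A -> B),
     value_preserving ca cb f A
       (fun x => (f x, x))
       (fun x' x => (ominus cb (f (oplus ca x x')) (f x), oplus ca x x')))
  /\
  (* (2) Self *)
  (forall (A A' B B' : Type) (ca : ChangeStruct A A') (cb : ChangeStruct B B')
          (f : A -> B) (d0 : A' -> B'),
     (forall x x', f (oplus ca x x') = oplus cb (f x) (d0 x')) ->
     value_preserving ca cb f unit
       (fun x => (f x, tt))
       (fun x' (_ : unit) => (d0 x', tt)))
  /\
  (* (3) Lin *)
  (forall (A B : Type) (ca : ChangeStruct A A) (cb : ChangeStruct B B)
          (f : A -> B),
     (forall x x', f (oplus ca x x') = oplus cb (f x) (f x')) ->
     value_preserving ca cb f unit
       (fun x => (f x, tt))
       (fun x' (_ : unit) => (f x', tt)))
  /\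
  (* (4) BiLin *)
  (forall (A B C0 : Type) (ca : ChangeStruct A A) (cb : ChangeStruct B B)
          (cc : ChangeStruct C0 C0) (f : A * B -> C0),
     (forall x x' y, f (oplus ca x x', y) = oplus cc (f (x, y)) (f (x', y))) ->
     (forall x y y', f (x, oplus cb y y') = oplus cc (f (x, y)) (f (x, y'))) ->
     (forall u v : C0, oplus cc u v = oplus cc v u) ->
     (forall u v w : C0, oplus cc (oplus cc u v) w = oplus cc u (oplus cc v w)) ->
     value_preserving (prodCS ca cb) cc f (A * B)
       (fun xy => (f xy, xy))
       (fun dxy xy =>
          (oplus cc (oplus cc (f (fst dxy, snd dxy)) (f (fst dxy, snd xy)))
                    (f (fst xy, snd dxy)),
           (oplus ca (fst xy) (fst dxy), oplus cb (snd xy) (snd dxy)))))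
  /\
  (* (5) Add *)
  (forall (A : Type) (ca : ChangeStruct A A),
     (forall u v : A, oplus ca u v = oplus ca v u) ->
     (forall u v w : A, oplus ca (oplus ca u v) w = oplus ca u (oplus ca v w)) ->
     value_preserving (prodCS ca ca) ca (fun xy => oplus ca (fst xy) (snd xy)) unit
       (fun xy => (oplus ca (fst xy) (snd xy), tt))
       (fun dxy (_ : unit) => (oplus ca (fst dxy) (snd dxy), tt))).
Proof.
  split; [|split; [|split; [|split]]].
  - intros A A' B B' ca cb f x xs.
    assert (H : iter cb (fun x => (f x, x))
       (fun x' x => (ominus cb (f (oplus ca x x')) (f x), oplus ca x x')) x xs
       = (f (sum ca x xs), sum ca x xs)).
    { induction xs as [|a xs IH]; simpl; [reflexivity|].
      rewrite IH. rewrite oplus_ominus. reflexivity. }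
    rewrite H; reflexivity.
  - intros A A' B B' ca cb f d0 Hf x xs.
    assert (H : iter cb (fun x => (f x, tt)) (fun x' (_ : unit) => (d0 x', tt)) x xs
       = (f (sum ca x xs), tt)).
    { induction xs as [|a xs IH]; simpl; [reflexivity|].
      rewrite IH. rewrite Hf. reflexivity. }
    rewrite H; reflexivity.
  - intros A B ca cb f Hf x xs.
    assert (H : iter cb (fun x => (f x, tt)) (fun x' (_ : unit) => (f x', tt)) x xs
       = (f (sum ca x xs), tt)).
    { induction xs as [|a xs IH]; simpl; [reflexivity|].
      rewrite IH. rewrite Hf. reflexivity. }
    rewrite H; reflexivity.
  - intros A B C0 ca cb cc f H1 H2 Hc Ha x xs.
    assert (H : forall xs, iter cc (fun xy => (f xy, xy))
       (fun dxy xy =>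
          (oplus cc (oplus cc (f (fst dxy, snd dxy)) (f (fst dxy, snd xy)))
                    (f (fst xy, snd dxy)),
           (oplus ca (fst xy) (fst dxy), oplus cb (snd xy) (snd dxy)))) x xs
       = (f (sum (prodCS ca cb) x xs), sum (prodCS ca cb) x xs)).
    { clear xs. intros xs. induction xs as [|[a b] xs IH]; simpl; [reflexivity|].
      rewrite IH. destruct (sum (prodCS ca cb) x xs) as [u v]. simpl.
      f_equal. rewrite H1, !H2.
      rewrite (Ha (f (u, v))). f_equal.
      rewrite (Hc (oplus cc (f (a, b)) (f (a, v)))). rewrite (Hc (f (a, b))). reflexivity.
      }
    rewrite H; reflexivity.
  - intros A ca Hc Ha x xs.
    assert (H : forall xs, iter ca (fun xy => (oplus ca (fst xy) (snd xy), tt))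
       (fun dxy (_ : unit) => (oplus ca (fst dxy) (snd dxy), tt)) x xs
       = (oplus ca (fst (sum (prodCS ca ca) x xs)) (snd (sum (prodCS ca ca) x xs)), tt)).
    { clear xs. intros xs. induction xs as [|[a b] xs IH]; simpl; [reflexivity|].
      rewrite IH. destruct (sum (prodCS ca ca) x xs) as [u v]. simpl.
      f_equal. rewrite !Ha. f_equal.
      rewrite <- Ha. rewrite (Hc v a). rewrite Ha. reflexivity. }
    rewrite H; reflexivity.
Qed.
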